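(* Let $G=(V,E)$ be a finite connected regular undirected unweighted graph with $n$ vertices, let $\lambda\in[0,1]$ and $S_0\subseteq V$. Then $\mathrm{fp}^{\lambda,1}_G(S_0)=|S_0|/n$, and for every $r>0$ the expected absorption time of the $\lambda$-mixed Moran process with fitness $r$ from $S_0$ is at most $C_r n^4$, where $C_r$ depends only on $r$ (i.e., it is $O_r(n^4)$).
   Context: The $\lambda$-mixed Moran process on a connected graph $G=(V,E)$ with $n=|V|\ge 2$: each vertex hosts a resident (fitness $1$) or mutant (fitness $r>0$); the state is the mutant set $S_t\subseteq V$. Each step, independently: with probability $\lambda$ a Birth-death step (a vertex $u$ chosen with probability proportional to fitness among all vertices; a uniformly random neighbor of $u$ takes $u$'s type); with probability $1-\lambda$ a death-Birth step (a uniformly random vertex $v$ dies; a neighbor $u$ of $v$ chosen with probability proportional to fitness among the neighbors of $v$; $v$ takes $u$'s type). $\mathrm{fp}^{\lambda,r}_G(S_0)$ is the probability of reaching $S_t=V$ from $S_0$; the absorption time is the expected number of steps until $S_t\in\{\emptyset,V\}$. *)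

(* Defs.v *)
From HB Require Import structures.
From mathcomp Require Import all_boot all_order all_algebra.
From mathcomp Require Import all_classical all_reals all_analysis.
Set Implicit Arguments. Unset Strict Implicit. Unset Printing Implicit Defensive.
Import Order.TTheory GRing.Theory Num.Theory.
Import numFieldNormedType.Exports.
Local Open Scope classical_set_scope.
Local Open Scope ring_scope.

Section Moran.
Variables (R : realType) (T : finType) (e : rel T).

Definition simple_graph := symmetric e /\ irreflexive e.
Definition connected_graph := forall x y : T, connect e x y.
Definition nbhd (x : T) : {set T} := [set y | e x y].
Definition deg (x : T) : nat := #|nbhd x|.
Definition regular_graph := exists d : nat, forall x : T, deg x = d.

Variables (lam r : R).

Definition fit (S : {set T}) (x : T) : R := if x \in S then r else 1.
Definition totfit (S : {set T}) : R := \sum_(x : T) fit S x.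
Definition nbfit (S : {set T}) (v : T) : R := \sum_(w in nbhd v) fit S w.

Definition upd (S : {set T}) (u v : T) : {set T} :=
  if u \in S then v |: S else S :\ v.

(* Birth-death step: u chosen prop. to fitness among all vertices,
   then a uniform neighbour v of u takes u's type. *)
Definition Bd_prob (S S' : {set T}) : R :=
  \sum_(u : T) \sum_(v in nbhd u)
     (fit S u / totfit S) * (deg u)%:R^-1 * (upd S u v == S')%:R.

(* death-Birth step: v chosen uniformly, dies; a neighbour u of v chosen
   prop. to fitness among neighbours of v; v takes u's type. *)
Definition dB_prob (S S' : {set T}) : R :=
  \sum_(v : T) \sum_(u in nbhd v)
     (#|T|%:R)^-1 * (fit S u / nbfit S v) * (upd S u v == S')%:R.

Definition trans (S S' : {set T}) : R :=
  lam * Bd_prob S S' + (1 - lam) * dB_prob S S'.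

Fixpoint hit_within (A : pred {set T}) (k : nat) (S : {set T}) : R :=
  if A S then 1 else
  match k with
  | 0 => 0
  | k'.+1 => \sum_(S' : {set T}) trans S S' * hit_within A k' S'
  end.

Definition is_full (S : {set T}) : bool := S == [set: T]%SET.
Definition is_absorbed (S : {set T}) : bool := (S == (@finset.set0 T)) || (S == [set: T]%SET).

(* fixation probability fp^{lam,r}_G(S0) is the limit of the probability of
   reaching S = V within k steps; we state convergence to the value. *)
Definition fixes_with_prob (S0 : {set T}) (p : R) : Prop :=
  (fun k => hit_within is_full k S0) @ \oo --> p.

(* expected absorption time: E[tau] = sum_{k>=0} P(tau > k), in \bar R *)
Definition absorption_time (S0 : {set T}) : \bar R :=
  (\sum_(0 <= k <oo) ((1 - hit_within is_absorbed k S0)%:E))%E.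

End Moran.

(* Main.v *)
Require Import Defs.
From HB Require Import structures.
From mathcomp Require Import all_boot all_order all_algebra.
From mathcomp Require Import all_classical all_reals all_analysis.
Import Order.TTheory GRing.Theory Num.Theory.
From mathcomp Require Import ring lra.
Import numFieldNormedType.Exports.
Local Open Scope classical_set_scope.
Local Open Scope ring_scope.



Lemma arithB (R : realType) (r F d n t : R) : 0 < r -> 0 < F -> F <= (r + 1) * n ->
  0 < d -> d <= n -> 0 <= (r - 1) * t ->
  (n ^+ 2)^-1 <= r / F * d^-1 * (2 * t + 1) + 1 / F * d^-1 * (1 - 2 * t).
Proof.
move=> r0 F0 Fn d0 dn rt.
have n0 : 0 < n by apply: lt_le_trans dn.
have -> : r / F * d^-1 * (2 * t + 1) + 1 / F * d^-1 * (1 - 2 * t)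
   = (r * (2 * t + 1) + (1 - 2 * t)) / (F * d).
  by field; rewrite ?gt_eqF.
rewrite ler_pdivlMr ?mulr_gt0 //.
have h1 : F * d <= (r + 1) * n * n.
  apply: le_trans (_ : (r + 1) * n * d <= _).
    by apply: ler_wpM2r => //; apply: ltW.
  apply: ler_wpM2l => //; apply: mulr_ge0; [lra | exact: ltW].
have h2 : (n ^+ 2)^-1 * (F * d) <= (n ^+ 2)^-1 * ((r + 1) * n * n).
  by apply: ler_wpM2l => //; rewrite invr_ge0 exprn_ge0 // ltW.
have e1 : (n ^+ 2)^-1 * ((r + 1) * n * n) = r + 1 by field; rewrite !gt_eqF.
rewrite e1 in h2; apply: le_trans h2 _; nra.
Qed.

Lemma arithD (R : realType) (r Na Nb d n t : R) : 0 < r -> 0 < Na -> 0 < Nb ->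
  Na <= (r + 1) * d -> Nb <= (r + 1) * d ->
  0 < d -> d <= n -> 0 <= t * (r / Nb - 1 / Na) ->
  (n ^+ 2)^-1 <= n^-1 * (1 / Na) * (1 - 2 * t) + n^-1 * (r / Nb) * (2 * t + 1).
Proof.
move=> r0 Na0 Nb0 Nad Nbd d0 dn sg.
have n0 : 0 < n by apply: lt_le_trans dn.
have hb : 1 / ((r + 1) * d) <= 1 / Na.
  have h : 0 < (r + 1) * d by apply: mulr_gt0 => //; lra.
  by rewrite !div1r lef_pV2 ?posrE.
have ha : r / ((r + 1) * d) <= r / Nb.
  have h : 0 < (r + 1) * d by apply: mulr_gt0 => //; lra.
  by apply: ler_wpM2l; [exact: ltW | rewrite lef_pV2 ?posrE].
have hs : d^-1 = r / ((r + 1) * d) + 1 / ((r + 1) * d).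
  by field; rewrite ?gt_eqF //; lra.
have hd : n^-1 <= d^-1.
  by rewrite lef_pV2 ?posrE.
set a := r / Nb in ha sg *; set b := 1 / Na in hb sg *.
have hab : n^-1 <= a + b by lra.
have -> : n^-1 * b * (1 - 2 * t) + n^-1 * a * (2 * t + 1) = n^-1 * ((a + b) + 2 * (t * (a - b))).
  by ring.
have -> : (n ^+ 2)^-1 = n^-1 * n^-1 by rewrite -exprVn expr2.
apply: ler_wpM2l; first by rewrite invr_ge0 ltW.
lra.
Qed.
Lemma eser (R : realType) (u : nat -> R) (B : R) : (forall k, 0 <= u k) ->
  (forall k, \sum_(j < k) u j <= B) ->
  ((\sum_(0 <= k <oo) (u k)%:E) <= B%:E)%E.
Proof.
move=> u0 hB.
apply: lime_le.
  by apply: is_cvg_nneseries => n _ _; rewrite lee_fin.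
apply: nearW => k; rewrite sumEFin lee_fin big_mkord; exact: hB.
Qed.
Lemma lim0 (R : realType) (h : nat -> R) (c B : R) : 
  (forall k, `|c - h k| <= B / k.+1%:R) -> h @ \oo --> c.
Proof.
move=> hk; apply/cvgrPdist_le => eps eps0.
apply: filterS (nbhs_infty_ge (Num.Def.trunc (B / eps))) => k /= Hk.
apply: le_trans (hk k) _.
have k0 : (0 : R) < k.+1%:R by rewrite ltr0n.
have := truncnS_gt (B / eps).
rewrite -(ler_nat R) in Hk.
move=> H1.
have H2 : B / eps < k.+1%:R.
  apply: lt_le_trans H1 _; by rewrite ler_nat ltnS -(ler_nat R).
rewrite ler_pdivrMr //.
rewrite ltr_pdivrMr // in H2.
lra.
Qed.

Section Gen.
Variables (R : realType) (T : finType) (e : rel T) (lam r : R) (t0 : T).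
Hypothesis degpos : forall x, (0 < deg e x)%N.
Hypothesis rpos : 0 < r.
Hypothesis lam01 : 0 <= lam <= 1.
Implicit Types (S : {set T}) (u v x : T) (A : pred {set T}).

Lemma fit_pos S x : 0 < fit r S x.
Proof. rewrite /fit; case: ifP => _ //; exact: ltr01. Qed.

Lemma totfit_pos S : 0 < totfit r S.
Proof.
rewrite /totfit (bigD1 t0) //=.
have h1 := fit_pos S t0.
have h2 : 0 <= \sum_(i | i != t0) fit r S i.
  by apply: sumr_ge0 => i _; apply: ltW; apply: fit_pos.
lra.
Qed.

Lemma nbfit_pos S v : 0 < nbfit e r S v.
Proof.
have /card_gt0P [w hw] := degpos v.
rewrite /nbfit (bigD1 w) //=.
have h1 := fit_pos S w.
have h2 : 0 <= \sum_(i in nbhd e v | i != w) fit r S i.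
  by apply: sumr_ge0 => i _; apply: ltW; apply: fit_pos.
lra.
Qed.

Lemma kernel_sum (c : T -> T -> R) (F : T -> T -> {set T}) (g : {set T} -> R) :
  \sum_(S' : {set T}) (\sum_(u : T) \sum_(v in nbhd e u) c u v * (F u v == S')%:R) * g S'
  = \sum_(u : T) \sum_(v in nbhd e u) c u v * g (F u v).
Proof.
under eq_bigr do rewrite mulr_suml; rewrite exchange_big /=; apply: eq_bigr => u _.
under eq_bigr do rewrite mulr_suml; rewrite exchange_big /=; apply: eq_bigr => v _.
rewrite (bigD1 (F u v)) //= eqxx mulr1 big1 ?addr0 // => S' H.
rewrite eq_sym (negbTE H).
by rewrite mulr0 mul0r.
Qed.

Definition wB S u := fit r S u / totfit r S * (deg e u)%:R^-1.
Definition wD S v u := (#|T|%:R)^-1 * (fit r S u / nbfit e r S v).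

Lemma Bd_kernel S g : \sum_S' Bd_prob e r S S' * g S' =
  \sum_(u : T) \sum_(v in nbhd e u) wB S u * g (upd S u v).
Proof. exact: (kernel_sum (fun u v => wB S u) (fun u v => upd S u v)). Qed.

Lemma dB_kernel S g : \sum_S' dB_prob e r S S' * g S' =
  \sum_(v : T) \sum_(u in nbhd e v) wD S v u * g (upd S u v).
Proof. exact: (kernel_sum (fun v u => wD S v u) (fun v u => upd S u v)). Qed.

Lemma wB_sum S : \sum_(u : T) \sum_(v in nbhd e u) wB S u = 1.
Proof.
under eq_bigr => u _.
  rewrite sumr_const -mulr_natr /wB -mulrA mulVf ?mulr1; last first.
    by rewrite pnatr_eq0 -lt0n degpos.
over.
by rewrite -mulr_suml divff // gt_eqF // totfit_pos.
Qed.

Lemma wD_sum S : \sum_(v : T) \sum_(u in nbhd e v) wD S v u = 1.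
Proof.
have n0 : (#|T|%:R : R) != 0.
  by rewrite pnatr_eq0 -lt0n; apply/card_gt0P; exists t0.
have E : forall v, \sum_(u in nbhd e v) wD S v u = (#|T|%:R)^-1.
  move=> v; rewrite /wD -mulr_sumr -mulr_suml -/(nbfit e r S v) divff ?mulr1 //.
  by rewrite gt_eqF // nbfit_pos.
under eq_bigr do rewrite E.
rewrite sumr_const -[X in X = 1]mulr_natr.
first [ by rewrite mulVf | (rewrite (_ : #|@xpredT T| = #|T|) //; exact: mulVf) | (by apply: mulVf) ].
Qed.

Lemma wB_ge0 S u : 0 <= wB S u.
Proof.
rewrite /wB; apply: mulr_ge0; last by rewrite invr_ge0.
apply: divr_ge0; apply: ltW; [exact: fit_pos | exact: totfit_pos].
Qed.

Lemma wD_ge0 S v u : 0 <= wD S v u.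
Proof.
rewrite /wD; apply: mulr_ge0; first by rewrite invr_ge0.
apply: divr_ge0; apply: ltW; [exact: fit_pos | exact: nbfit_pos].
Qed.

Lemma trans_kernel S g : \sum_S' trans e lam r S S' * g S' =
  lam * (\sum_(u : T) \sum_(v in nbhd e u) wB S u * g (upd S u v)) +
  (1 - lam) * (\sum_(v : T) \sum_(u in nbhd e v) wD S v u * g (upd S u v)).
Proof.
rewrite -Bd_kernel -dB_kernel !mulr_sumr -big_split /=.
by apply: eq_bigr => S' _; rewrite /trans mulrDl !mulrA.
Qed.

Lemma trans_sum1 S : \sum_S' trans e lam r S S' = 1.
Proof.
have := trans_kernel S (fun _ => 1).
under eq_bigr do rewrite mulr1.
move=> ->.
under eq_bigr do under eq_bigr do rewrite mulr1.
under [X in _ + _ * X]eq_bigr do under eq_bigr do rewrite mulr1.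
rewrite wB_sum wD_sum; lra.
Qed.

Lemma trans_ge0 S S' : 0 <= trans e lam r S S'.
Proof.
case/andP: lam01 => l0 l1.
rewrite /trans; apply: addr_ge0; apply: mulr_ge0; rewrite ?subr_ge0 //.
  apply: sumr_ge0 => u _; apply: sumr_ge0 => v _; apply: mulr_ge0 => //.
  exact: wB_ge0.
apply: sumr_ge0 => u _; apply: sumr_ge0 => v _; apply: mulr_ge0 => //.
exact: wD_ge0.
Qed.

Lemma hwS A k S : hit_within e lam r A k.+1 S =
  if A S then 1 else \sum_S' trans e lam r S S' * hit_within e lam r A k S'.
Proof. by []. Qed.

Lemma hw0 A S : hit_within e lam r A 0 S = if A S then 1 else 0.
Proof. by []. Qed.

Lemma hw_in A k S : A S -> hit_within e lam r A k S = 1.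
Proof. by case: k => [|k] /= ->. Qed.

Lemma hw01 A k S : 0 <= hit_within e lam r A k S <= 1.
Proof.
elim: k S => [|k IH] S.
  rewrite hw0; case: (A S) => //; rewrite lexx ler01 //.
rewrite hwS; case: (A S); first by rewrite ler01 lexx.
apply/andP; split.
  apply: sumr_ge0 => S' _; apply: mulr_ge0; first exact: trans_ge0.
  by case/andP: (IH S').
rewrite -(trans_sum1 S); apply: ler_sum => S' _.
rewrite -[X in _ <= X]mulr1; apply: ler_wpM2l; first exact: trans_ge0.
by case/andP: (IH S').
Qed.

Lemma hw_mono A k S : hit_within e lam r A k S <= hit_within e lam r A k.+1 S.
Proof.
elim: k S => [|k IH] S.
  rewrite hwS hw0; case: (A S) => //.
  apply: sumr_ge0 => S' _; apply: mulr_ge0; first exact: trans_ge0.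
  by case/andP: (hw01 A 0 S').
rewrite hwS [X in _ <= X]hwS; case: (A S) => //.
apply: ler_sum => S' _; apply: ler_wpM2l; [exact: trans_ge0 | exact: IH].
Qed.

Lemma hw_mono2 A j k S : (j <= k)%N ->
  hit_within e lam r A j S <= hit_within e lam r A k S.
Proof.
elim: k => [|k IH]; first by rewrite leqn0 => /eqP ->.
rewrite leq_eqVlt => /orP [/eqP -> // | ].
rewrite ltnS => /IH h; exact: le_trans h (hw_mono _ _ _).
Qed.

Lemma drift_bound (A : pred {set T}) (phi : {set T} -> R) (M q : R) :
  (forall S, 0 <= phi S <= M) ->
  (forall S, ~~ A S -> phi S + q <= \sum_S' trans e lam r S S' * phi S') ->
  forall k S, q * \sum_(j < k) (1 - hit_within e lam r A j S) <= M - phi S.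
Proof.
move=> phiB drift k; elim: k => [|k IH] S.
  rewrite big_ord0 mulr0 subr_ge0; by case/andP: (phiB S).
case AS: (A S).
  rewrite big1 ?mulr0 ?subr_ge0; first by case/andP: (phiB S).
  by move=> j _; rewrite hw_in // subrr.
rewrite big_ord_recl hw0 AS subr0.
have E : forall j : 'I_k, 1 - hit_within e lam r A (bump 0 j) S =
     \sum_S' trans e lam r S S' * (1 - hit_within e lam r A j S').
  move=> j; have -> : bump 0 j = j.+1 by [].
  rewrite hwS AS -[X in X - _](trans_sum1 S) -sumrB.
  by apply: eq_bigr => S' _; rewrite mulrBr mulr1.
under eq_bigr do rewrite E.
rewrite exchange_big /=.
under eq_bigr do rewrite -mulr_sumr.
have H1 : q * (\sum_S' trans e lam r S S' * \sum_(i < k) (1 - hit_within e lam r A i S'))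
   <= \sum_S' trans e lam r S S' * (M - phi S').
  rewrite mulr_sumr; apply: ler_sum => S' _.
  rewrite mulrCA; apply: ler_wpM2l; first exact: trans_ge0.
  exact: IH.
have H2 : \sum_S' trans e lam r S S' * (M - phi S') = M - \sum_S' trans e lam r S S' * phi S'.
  under eq_bigr do rewrite mulrBr.
  by rewrite sumrB -mulr_suml trans_sum1 mul1r.
have H3 := drift S (negbT AS).
rewrite mulrDr mulr1; lra.
Qed.


Variable d : nat.
Hypothesis esym : symmetric e.
Hypothesis dreg : forall x, deg e x = d.

Lemma pair_sum (f : T -> T -> R) :
  \sum_u \sum_(v in nbhd e u) f u v =
  2^-1 * \sum_u \sum_v (e u v)%:R * (f u v + f v u).
Proof.
have E1 : \sum_u \sum_(v in nbhd e u) f u v = \sum_u \sum_v (e u v)%:R * f u v.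
  apply: eq_bigr => u _; rewrite big_mkcond; apply: eq_bigr => v _.
  by rewrite inE; case: (e u v); rewrite ?mul1r ?mul0r.
have E2 : \sum_u \sum_v (e u v)%:R * f v u = \sum_u \sum_v (e u v)%:R * f u v.
  rewrite exchange_big /=; apply: eq_bigr => u _; apply: eq_bigr => v _.
  by rewrite esym.
have E3 : \sum_u \sum_v (e u v)%:R * (f u v + f v u) =
   \sum_u \sum_v (e u v)%:R * f u v + \sum_u \sum_v (e u v)%:R * f v u.
  rewrite -big_split /=; apply: eq_bigr => u _; rewrite -big_split /=.
  by apply: eq_bigr => v _; rewrite mulrDr.
by rewrite E3 E2 E1; field.
Qed.

Lemma double_sum_ge (G : T -> T -> R) a b : (forall u v, 0 <= G u v) ->
  G a b <= \sum_u \sum_v G u v.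
Proof.
move=> G0; rewrite (bigD1 a) //= (bigD1 b) //=.
have h1 : 0 <= \sum_(i | i != b) G a i by apply: sumr_ge0.
have h2 : 0 <= \sum_(i | i != a) \sum_v G i v.
  by apply: sumr_ge0 => i _; apply: sumr_ge0.
lra.
Qed.

Definition cc : R := if 1 <= r then 0 else #|T|%:R.
Definition phi S : R := (#|S|%:R - cc) ^+ 2.

Lemma upd_same S u v : (u \in S) = (v \in S) -> upd S u v = S.
Proof.
rewrite /upd => huv; case: ifP => hu; apply/setP => x; rewrite !inE;
  case: eqP => // ->; by rewrite -huv hu.
Qed.

Lemma card_upd_io S a b : a \in S -> b \notin S ->
  (#|upd S a b|%:R : R) = #|S|%:R + 1.
Proof.
by move=> ha hb; rewrite /upd ha cardsU1 hb natrD addrC.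
Qed.

Lemma card_upd_oi S a b : a \in S -> b \notin S ->
  (#|upd S b a|%:R : R) = #|S|%:R - 1.
Proof.
move=> ha hb; rewrite /upd (negbTE hb) [X in _ = X%:R - 1](cardsD1 a S) ha /= natrD.
ring.
Qed.

Lemma phi_io S a b : a \in S -> b \notin S ->
  phi (upd S a b) - phi S = 2 * (#|S|%:R - cc) + 1.
Proof. by move=> ha hb; rewrite /phi card_upd_io //; ring. Qed.

Lemma phi_oi S a b : a \in S -> b \notin S ->
  phi (upd S b a) - phi S = 1 - 2 * (#|S|%:R - cc).
Proof. by move=> ha hb; rewrite /phi card_upd_oi //; ring. Qed.

Lemma fit_bounds S x : Num.min 1 r <= fit r S x <= Num.max 1 r.
Proof.
rewrite /fit; case: ifP => _; rewrite ge_min le_max lexx ?orbT //.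
Qed.

Lemma sign_t S : 0 <= (r - 1) * (#|S|%:R - cc).
Proof.
rewrite /cc; case: ifP => h.
  by rewrite subr0; apply: mulr_ge0; rewrite ?subr_ge0.
have hm : (#|S|%:R : R) <= #|T|%:R by rewrite ler_nat max_card.
apply: mulr_le0; last by rewrite subr_le0.
rewrite subr_le0; apply: ltW; rewrite ltNge h //.
Qed.

Lemma d_pos : (0 : R) < d%:R.
Proof. by rewrite ltr0n -(dreg t0) degpos. Qed.

Lemma d_le_n : (d%:R : R) <= #|T|%:R.
Proof. by rewrite ler_nat -(dreg t0) max_card. Qed.

Lemma nbfit_bounds S v :
  Num.min 1 r * d%:R <= nbfit e r S v <= Num.max 1 r * d%:R.
Proof.
have E : forall c : R, \sum_(w in nbhd e v) c = c * d%:R.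
  by move=> c; rewrite sumr_const -(dreg v) mulr_natr.
rewrite -!E /nbfit; apply/andP; split;
  apply: ler_sum => w _; by case/andP: (fit_bounds S w).
Qed.

Lemma totfit_le S : totfit r S <= (r + 1) * #|T|%:R.
Proof.
have E : \sum_(w : T) (r + 1) = (r + 1) * #|T|%:R.
  rewrite sumr_const -[LHS]mulr_natr; congr (_ * _); by rewrite cardT.
rewrite -E /totfit; apply: ler_sum => w _.
rewrite /fit; case: ifP => _; [rewrite lerDl ler01 // | rewrite lerDr ltW //].
Qed.

Lemma maxr_le : Num.max 1 r <= r + 1.
Proof. rewrite ge_max lerDl ler01 lerDr ltW //. Qed.

Lemma sign_D S a b : a \in S -> b \notin S ->
  0 <= (#|S|%:R - cc) * (r / nbfit e r S b - 1 / nbfit e r S a).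
Proof.
move=> ha hb.
have Na0 := nbfit_pos S a; have Nb0 := nbfit_pos S b.
have := nbfit_bounds S a; have := nbfit_bounds S b.
have d0 := d_pos.
have hm : (#|S|%:R : R) <= #|T|%:R by rewrite ler_nat max_card.
rewrite /cc; case: ifP => h.
  have -> : Num.min 1 r = 1 by apply/min_idPl.
  have -> : Num.max 1 r = r by apply/max_idPr.
  rewrite mul1r => /andP [_ Nb] /andP [Na _].
  rewrite subr0; apply: mulr_ge0 => //; rewrite subr_ge0.
  apply: (@le_trans _ _ (1 / d%:R)).
    by rewrite !div1r lef_pV2 ?posrE.
  have -> : 1 / d%:R = r / (r * d%:R) by field; rewrite !gt_eqF.
  apply: ler_wpM2l; first exact: ltW.
  rewrite lef_pV2 ?posrE ?mulr_gt0 //.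
have hr : r <= 1 by apply: ltW; rewrite ltNge h.
have -> : Num.min 1 r = r by apply/min_idPr.
have -> : Num.max 1 r = 1 by apply/max_idPl.
rewrite mul1r => /andP [Nb _] /andP [_ Na].
apply: mulr_le0; first by rewrite subr_le0.
rewrite subr_le0.
apply: (@le_trans _ _ (1 / d%:R)); last first.
  by rewrite !div1r lef_pV2 ?posrE.
have -> : 1 / d%:R = r / (r * d%:R) by field; rewrite !gt_eqF.
apply: ler_wpM2l; first exact: ltW.
rewrite lef_pV2 ?posrE ?mulr_gt0 //.
Qed.

Definition fB S u v := wB S u * (phi (upd S u v) - phi S).
Definition hD S x y := wD S x y * (phi (upd S y x) - phi S).

Lemma Bd_pair S a b : a \in S -> b \notin S ->
  ((#|T|%:R : R) ^+ 2)^-1 <= fB S a b + fB S b a.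
Proof.
move=> ha hb; rewrite /fB (phi_io _ _ _ ha hb) (phi_oi _ _ _ ha hb) /wB !dreg /fit ha (negbTE hb).
apply: arithB => //.
- exact: totfit_pos.
- exact: totfit_le.
- exact: d_pos.
- exact: d_le_n.
- exact: sign_t.
Qed.

Lemma dB_pair S a b : a \in S -> b \notin S ->
  ((#|T|%:R : R) ^+ 2)^-1 <= hD S a b + hD S b a.
Proof.
move=> ha hb; rewrite /hD (phi_io _ _ _ ha hb) (phi_oi _ _ _ ha hb) /wD /fit ha (negbTE hb).
have := nbfit_bounds S a; have := nbfit_bounds S b => /andP [_ Nb] /andP [_ Na].
have mr := maxr_le; have d0 := d_pos.
apply: (@arithD R r _ _ d%:R) => //.
- exact: nbfit_pos.
- exact: nbfit_pos.
- apply: le_trans Na _; apply: ler_wpM2r => //; exact: ltW.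
- apply: le_trans Nb _; apply: ler_wpM2r => //; exact: ltW.
- exact: d_le_n.
- exact: sign_D.
Qed.

Lemma n2_ge0 : 0 <= ((#|T|%:R : R) ^+ 2)^-1.
Proof. by rewrite invr_ge0 exprn_ge0 // ler0n. Qed.

Lemma Bd_pair_ge0 S u v : 0 <= fB S u v + fB S v u.
Proof.
case hu: (u \in S); case hv: (v \in S).
- by rewrite /fB !upd_same ?hu ?hv // subrr !mulr0 addr0.
- exact: le_trans n2_ge0 (Bd_pair _ _ _ hu (negbT hv)).
- by rewrite addrC; exact: le_trans n2_ge0 (Bd_pair _ _ _ hv (negbT hu)).
- by rewrite /fB !upd_same ?hu ?hv // subrr !mulr0 addr0.
Qed.

Lemma dB_pair_ge0 S u v : 0 <= hD S u v + hD S v u.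
Proof.
case hu: (u \in S); case hv: (v \in S).
- by rewrite /hD !upd_same ?hu ?hv // subrr !mulr0 addr0.
- exact: le_trans n2_ge0 (dB_pair _ _ _ hu (negbT hv)).
- by rewrite addrC; exact: le_trans n2_ge0 (dB_pair _ _ _ hv (negbT hu)).
- by rewrite /hD !upd_same ?hu ?hv // subrr !mulr0 addr0.
Qed.

Lemma drift_phi S a b : a \in S -> b \notin S -> e a b ->
  phi S + 2^-1 * ((#|T|%:R : R) ^+ 2)^-1 <= \sum_S' trans e lam r S S' * phi S'.
Proof.
move=> ha hb eab; rewrite trans_kernel.
have LB : \sum_u \sum_(v in nbhd e u) wB S u * phi (upd S u v) =
    phi S + \sum_u \sum_(v in nbhd e u) fB S u v.
  rewrite -[X in X + _]mul1r -(wB_sum S) mulr_suml -big_split /=.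
  apply: eq_bigr => u _; rewrite mulr_suml -big_split /=.
  by apply: eq_bigr => v _; rewrite /fB; ring.
have LD : \sum_v \sum_(u in nbhd e v) wD S v u * phi (upd S u v) =
    phi S + \sum_v \sum_(u in nbhd e v) hD S v u.
  rewrite -[X in X + _]mul1r -(wD_sum S) mulr_suml -big_split /=.
  apply: eq_bigr => u _; rewrite mulr_suml -big_split /=.
  by apply: eq_bigr => v _; rewrite /hD; ring.
have GB : 2^-1 * ((#|T|%:R : R) ^+ 2)^-1 <= \sum_u \sum_(v in nbhd e u) fB S u v.
  rewrite pair_sum; apply: ler_wpM2l; first by rewrite invr_ge0 ler0n.
  apply: le_trans (double_sum_ge _ a b _).
    by rewrite eab mul1r; apply: Bd_pair.
  move=> u v; apply: mulr_ge0; [exact: ler0n | exact: Bd_pair_ge0].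
have GD : 2^-1 * ((#|T|%:R : R) ^+ 2)^-1 <= \sum_v \sum_(u in nbhd e v) hD S v u.
  rewrite pair_sum; apply: ler_wpM2l; first by rewrite invr_ge0 ler0n.
  apply: le_trans (double_sum_ge _ a b _).
    by rewrite eab mul1r; apply: dB_pair.
  move=> u v; apply: mulr_ge0; [exact: ler0n | exact: dB_pair_ge0].
rewrite LB LD.
case/andP: lam01 => l0 l1.
set q := 2^-1 * _ in GB GD *.
set XB := \sum_u _ in GB *; set XD := \sum_v _ in GD *.
have h1 : lam * q <= lam * XB by apply: ler_wpM2l.
have h2 : (1 - lam) * q <= (1 - lam) * XD by apply: ler_wpM2l; lra.
lra.
Qed.

Hypothesis conn : connected_graph e.

Lemma cut_edge S : ~~ is_absorbed S ->
  exists a, exists b, [/\ a \in S, b \notin S & e a b].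
Proof.
rewrite /is_absorbed negb_or => /andP [h0 hT].
have [a ha] : exists a, a \in S by apply/set0Pn.
have [b hb] : exists b, b \notin S.
  case: (pickP [pred b | b \notin S]) => [b hb | H]; first by exists b.
  exfalso; move/negP: hT; apply; apply/eqP/setP => x; rewrite inE.
  by have := H x => /= /negbFE.
case: (boolP [exists a', exists b', [&& a' \in S, b' \notin S & e a' b']]).
  move=> /existsP [a' /existsP [b' /and3P [h1 h2 h3]]].
  by exists a', b'.
move=> /existsPn H; exfalso.
have cl : fingraph.closed e S.
  move=> x y exy.
  case hx: (x \in S); case hy: (y \in S) => //.
  - by have := H x => /existsPn /(_ y); rewrite hx hy exy.
  - by have := H y => /existsPn /(_ x); rewrite hx hy esym exy.
have := closed_connect cl (conn a b); rewrite ha.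
by move=> hb'; rewrite -hb' in hb.
Qed.

Lemma n_pos : (0 : R) < #|T|%:R.
Proof. by rewrite ltr0n; apply/card_gt0P; exists t0. Qed.

Lemma phi_bounds S : 0 <= phi S <= (#|T|%:R) ^+ 2.
Proof.
have hm : (#|S|%:R : R) <= #|T|%:R by rewrite ler_nat max_card.
have hm0 : (0 : R) <= #|S|%:R by rewrite ler0n.
have n0 := n_pos.
rewrite /phi; apply/andP; split; first exact: sqr_ge0.
have hc : 0 <= cc <= #|T|%:R.
  by rewrite /cc; case: ifP => _; rewrite ?lexx ?ler0n.
case/andP: hc => hc0 hc1.
nra.
Qed.

Lemma partial_bound k S :
  \sum_(j < k) (1 - hit_within e lam r (@is_absorbed T) j S) <= 2 * (#|T|%:R) ^+ 4.
Proof.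
have n0 := n_pos.
have q0 : (0 : R) < 2^-1 * ((#|T|%:R) ^+ 2)^-1.
  by apply: mulr_gt0; rewrite invr_gt0 // exprn_gt0.
have key := drift_bound (@is_absorbed T) phi ((#|T|%:R) ^+ 2)
  (2^-1 * ((#|T|%:R) ^+ 2)^-1) phi_bounds.
have dr : forall S, ~~ is_absorbed S ->
   phi S + 2^-1 * ((#|T|%:R : R) ^+ 2)^-1 <= \sum_S' trans e lam r S S' * phi S'.
  move=> S' nS; have [a [b [ha hb eab]]] := cut_edge S' nS.
  exact: drift_phi ha hb eab.
have := key dr k S.
have := phi_bounds S => /andP [p0 _].
move=> h.
rewrite -(ler_pM2l q0).
have -> : 2^-1 * ((#|T|%:R : R) ^+ 2)^-1 * (2 * (#|T|%:R) ^+ 4) = (#|T|%:R) ^+ 2.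
  by field; rewrite gt_eqF.
lra.
Qed.

Lemma abs_bound S0 : (absorption_time e lam r S0 <= (2 * (#|T|%:R) ^+ 4)%:E)%E.
Proof.
rewrite /absorption_time; apply: eser; last by move=> k; exact: partial_bound.
by move=> k; rewrite subr_ge0; case/andP: (hw01 (@is_absorbed T) k S0).
Qed.

Lemma LinB S (g : {set T} -> R) : \sum_u \sum_(v in nbhd e u) wB S u * g (upd S u v) =
    g S + \sum_u \sum_(v in nbhd e u) wB S u * (g (upd S u v) - g S).
Proof.
rewrite -[X in X + _]mul1r -(wB_sum S) mulr_suml -big_split /=.
apply: eq_bigr => u _; rewrite mulr_suml -big_split /=.
by apply: eq_bigr => v _; ring.
Qed.

Lemma LinD S (g : {set T} -> R) : \sum_v \sum_(u in nbhd e v) wD S v u * g (upd S u v) =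
    g S + \sum_v \sum_(u in nbhd e v) wD S v u * (g (upd S u v) - g S).
Proof.
rewrite -[X in X + _]mul1r -(wD_sum S) mulr_suml -big_split /=.
apply: eq_bigr => u _; rewrite mulr_suml -big_split /=.
by apply: eq_bigr => v _; ring.
Qed.

Definition gc S : R := #|S|%:R.

Lemma gc_pair S u v : (gc (upd S u v) - gc S) + (gc (upd S v u) - gc S) = 0.
Proof.
case hu: (u \in S); case hv: (v \in S).
- by rewrite !upd_same ?hu ?hv // subrr addr0.
- rewrite /gc (card_upd_io _ _ _ hu (negbT hv)) (card_upd_oi _ _ _ hu (negbT hv)); ring.
- rewrite /gc (card_upd_io _ _ _ hv (negbT hu)) (card_upd_oi _ _ _ hv (negbT hu)); ring.
- by rewrite !upd_same ?hu ?hv // subrr addr0.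
Qed.

Hypothesis r1 : r = 1.

Lemma fit1 S x : fit r S x = 1.
Proof. by rewrite /fit r1; case: ifP. Qed.

Lemma nbfit1 S x : nbfit e r S x = d%:R.
Proof.
rewrite /nbfit; under eq_bigr do rewrite fit1.
by rewrite sumr_const -(dreg x).
Qed.

Lemma martingale S : \sum_S' trans e lam r S S' * gc S' = gc S.
Proof.
rewrite trans_kernel LinB LinD.
have ZB : \sum_u \sum_(v in nbhd e u) wB S u * (gc (upd S u v) - gc S) = 0.
  rewrite (pair_sum (fun u v => wB S u * (gc (upd S u v) - gc S))).
  rewrite big1 ?mulr0 // => u _; apply: big1 => v _.
  have -> : wB S v = wB S u by rewrite /wB !fit1 !dreg.
  by rewrite -mulrDr gc_pair !mulr0.
have ZD : \sum_v \sum_(u in nbhd e v) wD S v u * (gc (upd S u v) - gc S) = 0.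
  rewrite (pair_sum (fun v u => wD S v u * (gc (upd S u v) - gc S))).
  rewrite big1 ?mulr0 // => u _; apply: big1 => v _.
  have -> : wD S v u = wD S u v by rewrite /wD !fit1 !nbfit1.
  by rewrite -mulrDr addrC gc_pair !mulr0.
rewrite ZB ZD; ring.
Qed.

Lemma fix_bounds k S :
  #|T|%:R * hit_within e lam r (@is_full T) k S <= gc S <=
  #|T|%:R * hit_within e lam r (@is_full T) k S +
  #|T|%:R * (1 - hit_within e lam r (@is_absorbed T) k S).
Proof.
have n0 := n_pos.
elim: k S => [|k IH] S.
  rewrite !hw0 /is_full /is_absorbed.
  case: (boolP (S == [set: T]%SET)) => [/eqP -> | hT]; rewrite ?orbT /=.
    by rewrite /gc cardsT subrr mulr0 addr0 mulr1 lexx.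
  case: (boolP (S == @finset.set0 T)) => [/eqP -> | h0] /=.
    by rewrite /gc cards0 subrr !mulr0 addr0 lexx.
  rewrite mulr0 add0r subr0 mulr1 /gc ler0n ler_nat max_card //.
rewrite !hwS /is_full /is_absorbed.
case: (boolP (S == [set: T]%SET)) => [/eqP -> | hT]; rewrite ?orbT /=.
  by rewrite /gc cardsT subrr mulr0 addr0 mulr1 lexx.
set P := trans e lam r S.
set h := hit_within e lam r (@is_full T) k.
set a := hit_within e lam r (@is_absorbed T) k.
have lo : #|T|%:R * (\sum_S' P S' * h S') <= gc S.
  rewrite mulr_sumr -(martingale S); apply: ler_sum => S' _.
  rewrite mulrCA; apply: ler_wpM2l; first exact: trans_ge0.
  by case/andP: (IH S').
have h0' : 0 <= \sum_S' P S' * h S'.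
  apply: sumr_ge0 => S' _; apply: mulr_ge0; first exact: trans_ge0.
  by case/andP: (hw01 (@is_full T) k S').
case: (boolP (S == @finset.set0 T)) => [/eqP E | hS0] /=.
  rewrite lo /= subrr mulr0 addr0 E /gc cards0.
  by apply: mulr_ge0 => //; apply: ltW.
rewrite lo /=.
have E : \sum_S' P S' * (#|T|%:R * h S' + #|T|%:R * (1 - a S')) =
   #|T|%:R * (\sum_S' P S' * h S') + #|T|%:R * (1 - \sum_S' P S' * a S').
  rewrite (eq_bigr (fun S' => #|T|%:R * (P S' * h S') + #|T|%:R * P S' - #|T|%:R * (P S' * a S'))); last first.
    by move=> S' _; ring.
  rewrite sumrB big_split /= -!mulr_sumr /P trans_sum1; ring.
rewrite -E -{1}(martingale S); apply: ler_sum => S' _.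
apply: ler_wpM2l; first exact: trans_ge0.
by case/andP: (IH S').
Qed.

Lemma fix_lim S0 : fixes_with_prob e lam r S0 (#|S0|%:R / #|T|%:R).
Proof.
have n0 := n_pos.
apply: (@lim0 R _ _ (2 * (#|T|%:R) ^+ 4)) => k.
set h := hit_within e lam r (@is_full T) k S0.
set u := 1 - hit_within e lam r (@is_absorbed T) k S0.
have [lo up] := andP (fix_bounds k S0).
have u0 : 0 <= u by rewrite /u subr_ge0; case/andP: (hw01 (@is_absorbed T) k S0).
have uB : u <= 2 * (#|T|%:R) ^+ 4 / k.+1%:R.
  rewrite ler_pdivlMr ?ltr0n //.
  apply: le_trans (partial_bound k.+1 S0).
  have -> : u * k.+1%:R = \sum_(j < k.+1) u.
    by rewrite sumr_const card_ord mulr_natr.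
  apply: ler_sum => j _; rewrite /u lerB //.
  by apply: hw_mono2; rewrite -ltnS ltn_ord.
have c1 : h <= #|S0|%:R / #|T|%:R by rewrite ler_pdivlMr // mulrC.
have c2 : #|S0|%:R / #|T|%:R <= h + u.
  by rewrite ler_pdivrMr // mulrDl mulrC [u * _]mulrC.
move: c1 c2 uB u0.
set c := (#|S0|%:R / #|T|%:R).
set Bk := (2 * (#|T|%:R) ^+ 4 / k.+1%:R).
move=> c1 c2 uB u0.
rewrite ler_norml; apply/andP; split.
- apply: (@le_trans _ _ 0); first by rewrite oppr_le0; exact: le_trans u0 uB.
  by rewrite subr_ge0.
- by rewrite lerBlDl; apply: le_trans c2 _; rewrite lerD2l.
Qed.

End Gen.

Lemma deg_pos (T : finType) (e : rel T) : (1 < #|T|)%N -> connected_graph e ->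
  forall x, (0 < deg e x)%N.
Proof.
move=> hT conn x.
have /card_gt0P [y hy] : (0 < #|[set~ x]%SET|)%N by rewrite cardsC1 -subn1 subn_gt0.
have yx : y != x by move: hy; rewrite !inE.
have := conn x y => /connectP [p pth ylast].
case: p pth ylast => [|z p] /=; first by move=> _ hyx; rewrite hyx eqxx in yx.
move=> /andP [exz _] _; apply/card_gt0P; exists z; by rewrite inE.
Qed.

Local Close Scope classical_set_scope.

Theorem mainTheorem7 :
  (forall (R : realType) (T : finType) (e : rel T) (lam : R) (S0 : {set T}),
      (1 < #|T|)%N -> simple_graph e -> connected_graph e -> regular_graph e ->
      0 <= lam <= 1 ->
      fixes_with_prob e lam 1 S0 (#|S0|%:R / #|T|%:R))
  /\
  (forall (R : realType) (r : R), 0 < r ->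
     exists C : R, forall (T : finType) (e : rel T) (lam : R) (S0 : {set T}),
      (1 < #|T|)%N -> simple_graph e -> connected_graph e -> regular_graph e ->
      0 <= lam <= 1 ->
      (absorption_time e lam r S0 <= (C * (#|T|%:R) ^+ 4)%:E)%E).
Proof.
split.
- move=> R T e lam S0 hT [esym _] conn [d dreg] lam01.
  have /card_gt0P [t0 _] : (0 < #|T|)%N by apply: ltn_trans hT.
  have degpos := @deg_pos T e hT conn.
  exact: (@fix_lim R T e lam 1 t0 degpos ltr01 lam01 d esym dreg conn erefl S0).
- move=> R r rpos; exists 2 => T e lam S0 hT [esym _] conn [d dreg] lam01.
  have /card_gt0P [t0 _] : (0 < #|T|)%N by apply: ltn_trans hT.
  have degpos := @deg_pos T e hT conn.
  exact: (@abs_bound R T e lam r t0 degpos rpos lam01 d esym dreg conn S0).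
Qed.
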